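(* Let $C$ be a convex subset of the Euclidean plane $\mathbb{R}^2$ (not necessarily closed or bounded). Then for every finite point set $P \subset \mathbb{R}^2$, the straight-line drawing of $G_{st}(P,C)$ is a plane graph.
   Context: For a finite set $P \subset \mathbb{R}^2$ and a set $C \subseteq \mathbb{R}^2$, $G_{st}(P,C)$ is the graph with vertex set $P$ in which two distinct points $u,v \in P$ are adjacent if and only if there is a positively scaled translate (homothet) $\lambda C + \mathbf{v} = \{\lambda x + \mathbf{v} : x \in C\}$, with $\lambda > 0$ and $\mathbf{v} \in \mathbb{R}^2$, such that $P \cap (\lambda C + \mathbf{v}) = \{u,v\}$. The graph is drawn with each vertex at its point and each edge as the closed straight-line segment between its endpoints. A drawing is a plane graph if (1) no vertex lies on an edge of which it is not an endpoint, and (2) no two edges cross, i.e., two edges may intersect only at a common endpoint. *)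

(* Defs.v *)
From Stdlib Require Import Reals List.
Open Scope R_scope.

Definition pt := (R * R)%type.

Definition padd (p q : pt) : pt := (fst p + fst q, snd p + snd q).
Definition pscale (l : R) (p : pt) : pt := (l * fst p, l * snd p).

Definition convex (C : pt -> Prop) : Prop :=
  forall x y t, C x -> C y -> 0 <= t <= 1 ->
    C (padd (pscale (1 - t) x) (pscale t y)).

Definition homothet (C : pt -> Prop) (lam : R) (v : pt) (p : pt) : Prop :=
  exists x, C x /\ p = padd (pscale lam x) v.

Definition st_adj (P : list pt) (C : pt -> Prop) (u v : pt) : Prop :=
  In u P /\ In v P /\ u <> v /\
  exists lam (w : pt), 0 < lam /\
    forall p, In p P -> (homothet C lam w p <-> (p = u \/ p = v)).

Definition on_seg (a b p : pt) : Prop :=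
  exists t, 0 <= t <= 1 /\ p = padd (pscale (1 - t) a) (pscale t b).

Definition plane_drawing (P : list pt) (adj : pt -> pt -> Prop) : Prop :=
  (forall u v w, adj u v -> In w P -> w <> u -> w <> v -> ~ on_seg u v w) /\
  (forall a b c d p, adj a b -> adj c d ->
     ~ ((a = c /\ b = d) \/ (a = d /\ b = c)) ->
     on_seg a b p -> on_seg c d p ->
     (p = a \/ p = b) /\ (p = c \/ p = d)).

(* Main.v *)
Require Import Defs.
From Stdlib Require Import Reals List Lra.
Open Scope R_scope.

Lemma frac01 a b : 0 <= a -> 0 < b -> a <= b -> 0 <= a / b <= 1.
Proof.
  intros Ha Hb Hab. split.
  - unfold Rdiv; apply Rmult_le_pos; [lra| apply Rlt_le, Rinv_0_lt_compat; lra].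
  - apply Rmult_le_reg_r with b; [lra|]. unfold Rdiv. rewrite Rmult_assoc, Rinv_l; lra.
Qed.

Lemma Cmem (C:pt->Prop) x y : C x -> x = y -> C y.
Proof. intros; subst; auto. Qed.

Lemma cvx C (HC:convex C) x y t z : C x -> C y -> 0 <= t <= 1 ->
  z = padd (pscale (1-t) x) (pscale t y) -> C z.
Proof. intros; subst; apply HC; auto. Qed.

Ltac peq := unfold padd, pscale; simpl; f_equal; field; repeat split; lra.

Lemma core C (HC : convex C) (X Y e u : pt) (s r y1 y2 k : R) :
  0 <= s -> 0 <= r -> 0 <= y1 -> 0 <= y2 -> 0 < k ->
  C X -> C Y -> C (padd X (pscale (-s) e)) -> C (padd Y (pscale r u)) ->
  Y = padd X (padd (pscale y1 e) (pscale y2 u)) ->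
  C (padd Y (pscale (-(s/k)) e)) \/ C (padd X (pscale (k*r) u)).
Proof.
  intros Hs Hr Hy1 Hy2 Hk HX HY HA HD HYe.
  destruct X as [x1 x2], e as [e1 e2], u as [u1 u2]. subst Y.
  destruct Hs as [Hs|<-].
  2:{ left. eapply Cmem; [exact HY|]. peq. }
  destruct Hr as [Hr|<-].
  2:{ right. eapply Cmem; [exact HX|]. peq. }
  destruct (Rle_lt_dec (s*(y2+r)) (k*r*(s+y1))) as [H1|H1].
  - left.
    set (t := r/(y2+r)).
    assert (Ht : 0 <= t <= 1) by (apply frac01; lra).
    assert (HP1 := HC _ _ t HD HA Ht).
    eapply cvx; [exact HC| exact HY | exact HP1 | apply (frac01 (s*(y2+r)) (k*r*(s+y1))) |].
    + nra.
    + apply Rmult_lt_0_compat; nra.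
    + exact H1.
    + unfold t; peq.
  - right.
    set (t := s/(s+y1)).
    assert (Ht : 0 <= t <= 1) by (apply frac01; lra).
    assert (HP2 := HC _ _ t HA HD Ht).
    eapply cvx; [exact HC| exact HX | exact HP2 | apply (frac01 (k*r*(s+y1)) (s*(y2+r))) |].
    + apply Rmult_le_pos; nra.
    + nra.
    + lra.
    + unfold t; peq.
Qed.

Lemma core2 C (HC : convex C) (X Y e : pt) (s r k : R) :
  0 <= s -> 0 <= r -> 0 < k ->
  C X -> C Y -> C (padd X (pscale (-s) e)) -> C (padd Y (pscale (-r) e)) ->
  C (padd Y (pscale (-(s/k)) e)) \/ C (padd X (pscale (-(k*r)) e)).
Proof.
  intros Hs Hr Hk HX HY HA HD.
  destruct X as [x1 x2], Y as [y1 y2], e as [e1 e2].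
  destruct Hs as [Hs|<-].
  2:{ left. eapply Cmem; [exact HY|]. peq. }
  destruct Hr as [Hr|<-].
  2:{ right. eapply Cmem; [exact HX|]. peq. }
  destruct (Rle_lt_dec s (k*r)) as [H1|H1].
  - left. eapply cvx; [exact HC| exact HY | exact HD | apply (frac01 s (k*r)) |]; try nra.
    peq.
  - right. eapply cvx; [exact HC| exact HX | exact HA | apply (frac01 (k*r) s) |]; try nra.
    peq.
Qed.

Lemma keyL C (HC: convex C) a b c d p lam1 w1 lam2 w2 :
  0 < lam1 -> 0 < lam2 -> a <> b ->
  homothet C lam1 w1 a -> homothet C lam1 w1 b -> homothet C lam2 w2 c -> homothet C lam2 w2 d ->
  on_seg a b p -> on_seg c d p ->
  homothet C lam1 w1 c \/ homothet C lam1 w1 d \/ homothet C lam2 w2 a \/ homothet C lam2 w2 b.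
Proof.
  intros Hl1 Hl2 Hab [xa [Ca ->]] [xb [Cb ->]] [xc [Cc ->]] [xd [Cd ->]] [t1 [Ht1 Hp1]] [t2 [Ht2 Hp2]].
  destruct xa as [a1 a2], xb as [b1 b2], xc as [c1 c2], xd as [d1 d2], w1 as [v1 v2], w2 as [z1 z2].
  subst p. unfold padd, pscale in Hp2; simpl in Hp2. injection Hp2 as E1 E2.
  set (X := ((1-t1)*a1 + t1*b1, (1-t1)*a2+t1*b2)).
  set (Y := ((1-t2)*c1 + t2*d1, (1-t2)*c2+t2*d2)).
  assert (Z1 : z1 = lam1*fst X + v1 - lam2 * fst Y) by (simpl; lra).
  assert (Z2 : z2 = lam1*snd X + v2 - lam2 * snd Y) by (simpl; lra).
  clear E1 E2. subst z1 z2.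
  assert (CX : C X) by (eapply cvx; [exact HC|exact Ca|exact Cb|exact Ht1|unfold X; peq]).
  assert (CY : C Y) by (eapply cvx; [exact HC|exact Cc|exact Cd|exact Ht2|unfold Y; peq]).
  set (e := (b1-a1, b2-a2)). set (u := (d1-c1, d2-c2)). set (k := lam2/lam1).
  assert (Hk : 0 < k) by (unfold k; unfold Rdiv; apply Rmult_lt_0_compat; [lra| apply Rinv_0_lt_compat; lra]).
  assert (QA : C (padd Y (pscale (-(t1/k)) e)) -> homothet C lam2 (lam1 * fst X + v1 - lam2 * fst Y, lam1 * snd X + v2 - lam2 * snd Y) (padd (pscale lam1 (a1, a2)) (v1, v2))).
  { intro H. eexists; split; [exact H|]. unfold X, Y, e, k; peq. }
  assert (QB : C (padd Y (pscale (-((1-t1)/k)) (pscale (-1) e))) -> homothet C lam2 (lam1 * fst X + v1 - lam2 * fst Y, lam1 * snd X + v2 - lam2 * snd Y) (padd (pscale lam1 (b1, b2)) (v1, v2))).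
  { intro H. eexists; split; [exact H|]. unfold X, Y, e, k; peq. }
  assert (QC : C (padd X (pscale (k*t2) (pscale (-1) u))) -> homothet C lam1 (v1,v2) (padd (pscale lam2 (c1, c2)) (lam1 * fst X + v1 - lam2 * fst Y, lam1 * snd X + v2 - lam2 * snd Y))).
  { intro H. eexists; split; [exact H|]. unfold X, Y, u, k; peq. }
  assert (QD : C (padd X (pscale (k*(1-t2)) u)) -> homothet C lam1 (v1,v2) (padd (pscale lam2 (d1, d2)) (lam1 * fst X + v1 - lam2 * fst Y, lam1 * snd X + v2 - lam2 * snd Y))).
  { intro H. eexists; split; [exact H|]. unfold X, Y, u, k; peq. }
  assert (CA : C (padd X (pscale (-t1) e))) by (eapply Cmem; [exact Ca| unfold X, e; peq]).
  assert (CB : C (padd X (pscale (-(1-t1)) (pscale (-1) e)))) by (eapply Cmem; [exact Cb| unfold X, e; peq]).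
  assert (CC : C (padd Y (pscale t2 (pscale (-1) u)))) by (eapply Cmem; [exact Cc| unfold Y, u; peq]).
  assert (CD : C (padd Y (pscale (1-t2) u))) by (eapply Cmem; [exact Cd| unfold Y, u; peq]).
  set (det := (b1-a1)*(d2-c2) - (b2-a2)*(d1-c1)).
  destruct (Req_dec det 0) as [Hdet|Hdet].
  - set (ee := (b1-a1)*(b1-a1) + (b2-a2)*(b2-a2)).
    assert (Hee : 0 < ee).
    { destruct (Rlt_or_le 0 ee) as [h|h]; [exact h|]. exfalso. apply Hab. unfold ee in h.
      pose proof (Rle_0_sqr (b1-a1)); pose proof (Rle_0_sqr (b2-a2)); unfold Rsqr in *. assert (b1 - a1 = 0) by nra. assert (b2-a2=0) by nra. unfold padd, pscale; simpl; f_equal.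
      - replace b1 with a1 by lra; ring.
      - replace b2 with a2 by lra; ring. }
    set (m := ((d1-c1)*(b1-a1) + (d2-c2)*(b2-a2))/ee).
    assert (Hu1 : d1 - c1 = m*(b1-a1)).
    { apply Rmult_eq_reg_r with ee; [|lra]. unfold m. field_simplify; [|lra]. unfold ee, det in *.
      assert (H := f_equal (fun z => z*(b2-a2)) Hdet). simpl in H. nra. }
    assert (Hu2 : d2 - c2 = m*(b2-a2)).
    { apply Rmult_eq_reg_r with ee; [|lra]. unfold m. field_simplify; [|lra]. unfold ee, det in *.
      assert (H := f_equal (fun z => z*(b1-a1)) Hdet). simpl in H. nra. }
    destruct (Rle_lt_dec 0 m) as [Hm|Hm].
    + assert (CC' : C (padd Y (pscale (-(t2*m)) e))).
      { eapply Cmem; [exact CC|]. unfold u, e. unfold padd, pscale; simpl. rewrite Hu1, Hu2. f_equal; ring. }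
      destruct (core2 C HC X Y e t1 (t2*m) k ltac:(lra) ltac:(nra) Hk CX CY CA CC') as [H|H].
      * right; right; left; apply QA; exact H.
      * left; apply QC. eapply Cmem; [exact H|]. unfold u, e. unfold padd, pscale; simpl. rewrite Hu1, Hu2. f_equal; ring.
    + assert (CD' : C (padd Y (pscale (-((1-t2)*(-m))) e))).
      { eapply Cmem; [exact CD|]. unfold u, e. unfold padd, pscale; simpl. rewrite Hu1, Hu2. f_equal; ring. }
      destruct (core2 C HC X Y e t1 ((1-t2)*(-m)) k ltac:(lra) ltac:(nra) Hk CX CY CA CD') as [H|H].
      * right; right; left; apply QA; exact H.
      * right; left; apply QD. eapply Cmem; [exact H|]. unfold u, e. unfold padd, pscale; simpl. rewrite Hu1, Hu2. f_equal; ring.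
  - set (W1 := fst Y - fst X). set (W2 := snd Y - snd X).
    set (y1 := (W1*(d2-c2) - W2*(d1-c1))/det).
    set (y2 := ((b1-a1)*W2 - (b2-a2)*W1)/det).
    assert (HYe : Y = padd X (padd (pscale y1 e) (pscale y2 u))).
    { unfold y1, y2, W1, W2, e, u, det in *. destruct X as [x1 x2], Y as [y1' y2'].
      unfold padd, pscale; simpl. f_equal; field; exact Hdet. }
    assert (HYe' : forall sg1 sg2, sg1*sg1 = 1 -> sg2*sg2 = 1 ->
      Y = padd X (padd (pscale (sg1*y1) (pscale sg1 e)) (pscale (sg2*y2) (pscale sg2 u)))).
    { intros sg1 sg2 H1 H2. transitivity (padd X (padd (pscale y1 e) (pscale y2 u))); [exact HYe|].
      destruct X as [x1 x2], e as [e1 e2], u as [u1 u2]. unfold padd, pscale; simpl. f_equal.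
      - replace (sg1 * y1 * (sg1 * e1) + sg2 * y2 * (sg2 * u1)) with ((sg1*sg1)*(y1*e1) + (sg2*sg2)*(y2*u1)) by ring. rewrite H1, H2; ring.
      - replace (sg1 * y1 * (sg1 * e2) + sg2 * y2 * (sg2 * u2)) with ((sg1*sg1)*(y1*e2) + (sg2*sg2)*(y2*u2)) by ring. rewrite H1, H2; ring. }
    assert (Hm : (-1)*(-1) = 1) by ring. assert (Hp : 1*1 = 1) by ring.
    assert (E1 : forall v : pt, pscale 1 v = v) by (intros [? ?]; unfold pscale; simpl; f_equal; ring).
    destruct (Rle_lt_dec 0 y1) as [Hy1|Hy1]; destruct (Rle_lt_dec 0 y2) as [Hy2|Hy2].
    + pose proof (HYe' 1 1 Hp Hp) as H0. rewrite !E1, !Rmult_1_l in H0.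
      destruct (core C HC X Y e u t1 (1-t2) y1 y2 k ltac:(lra) ltac:(lra) Hy1 Hy2 Hk CX CY CA CD H0) as [H|H].
      * right; right; left; apply QA; exact H.
      * right; left; apply QD; exact H.
    + pose proof (HYe' 1 (-1) Hp Hm) as H0. rewrite !E1, !Rmult_1_l in H0.
      destruct (core C HC X Y e (pscale (-1) u) t1 t2 y1 (-1*y2) k ltac:(lra) ltac:(lra) Hy1 ltac:(lra) Hk CX CY CA CC H0) as [H|H].
      * right; right; left; apply QA; exact H.
      * left; apply QC; exact H.
    + pose proof (HYe' (-1) 1 Hm Hp) as H0. rewrite !E1, !Rmult_1_l in H0.
      destruct (core C HC X Y (pscale (-1) e) u (1-t1) (1-t2) (-1*y1) y2 k ltac:(lra) ltac:(lra) ltac:(lra) Hy2 Hk CX CY CB CD H0) as [H|H].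
      * right; right; right; apply QB; exact H.
      * right; left; apply QD; exact H.
    + pose proof (HYe' (-1) (-1) Hm Hm) as H0.
      destruct (core C HC X Y (pscale (-1) e) (pscale (-1) u) (1-t1) t2 (-1*y1) (-1*y2) k ltac:(lra) ltac:(lra) ltac:(lra) ltac:(lra) Hk CX CY CB CC H0) as [H|H].
      * right; right; right; apply QB; exact H.
      * left; apply QC; exact H.
Qed.

Lemma on_seg_sym a b p : on_seg a b p -> on_seg b a p.
Proof.
  intros [t [Ht ->]]. exists (1-t). split; [lra|].
  destruct a, b; unfold padd, pscale; simpl; f_equal; ring.
Qed.

Lemma adj_sym P C a b : st_adj P C a b -> st_adj P C b a.
Proof.
  intros [Ha [Hb [Hab [lam [w [Hl H]]]]]].
  repeat split; auto. exists lam, w; split; auto.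
  intros q Hq. rewrite (H q Hq). tauto.
Qed.

Lemma part1 P C (HC : convex C) u v w :
  st_adj P C u v -> In w P -> w <> u -> w <> v -> ~ on_seg u v w.
Proof.
  intros [Hu [Hv [Huv [lam [w0 [Hl H]]]]]] Hw Hwu Hwv [t [Ht Hwe]].
  destruct (proj2 (H u Hu) (or_introl eq_refl)) as [xu [Cu Eu]].
  destruct (proj2 (H v Hv) (or_intror eq_refl)) as [xv [Cv Ev]].
  assert (Hh : homothet C lam w0 w).
  { exists (padd (pscale (1-t) xu) (pscale t xv)). split; [apply HC; auto|].
    rewrite Hwe, Eu, Ev. destruct xu, xv, w0; unfold padd, pscale; simpl; f_equal; ring. }
  destruct (proj1 (H w Hw) Hh); contradiction.
Qed.

Lemma share P C (HC : convex C) a b d p :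
  st_adj P C a b -> st_adj P C a d -> b <> d -> on_seg a b p -> on_seg a d p -> p = a.
Proof.
  intros Hab Had Hbd [t [Ht Hp]] [t' [Ht' Hp']].
  destruct (Req_dec t 0) as [H0|H0].
  { subst. destruct a, b; unfold padd, pscale; simpl; f_equal; ring. }
  destruct (Req_dec t' 0) as [H0'|H0'].
  { rewrite Hp'; subst t'. destruct a, d; unfold padd, pscale; simpl; f_equal; ring. }
  exfalso.
  pose proof (proj1 (proj2 Hab)) as Hb. pose proof (proj1 (proj2 (proj2 Hab))) as Hab'.
  pose proof (proj1 (proj2 Had)) as Hd. pose proof (proj1 (proj2 (proj2 Had))) as Had'.
  rewrite Hp in Hp'. destruct a as [a1 a2], b as [b1 b2], d as [d1 d2].
  unfold padd, pscale in Hp'; simpl in Hp'. injection Hp' as E1 E2.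
  destruct (Rle_lt_dec t t') as [Hl|Hl].
  - apply (part1 P C HC (a1,a2) (b1,b2) (d1,d2)); auto.
    + exists (t/t'). split.
      * split; [apply Rmult_le_pos; [lra| apply Rlt_le, Rinv_0_lt_compat; lra]|].
        apply Rmult_le_reg_r with t'; [lra|]. unfold Rdiv. rewrite Rmult_assoc, Rinv_l; lra.
      * unfold padd, pscale; simpl; f_equal.
        -- apply Rmult_eq_reg_l with t'; [|lra]. field_simplify; [|lra]. lra.
        -- apply Rmult_eq_reg_l with t'; [|lra]. field_simplify; [|lra]. lra.
  - apply (part1 P C HC (a1,a2) (d1,d2) (b1,b2)); auto.
    + exists (t'/t). split.
      * split; [apply Rmult_le_pos; [lra| apply Rlt_le, Rinv_0_lt_compat; lra]|].
        apply Rmult_le_reg_r with t; [lra|]. unfold Rdiv. rewrite Rmult_assoc, Rinv_l; lra.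
      * unfold padd, pscale; simpl; f_equal.
        -- apply Rmult_eq_reg_l with t; [|lra]. field_simplify; [|lra]. lra.
        -- apply Rmult_eq_reg_l with t; [|lra]. field_simplify; [|lra]. lra.
Qed.

Theorem mainTheorem2 (C : pt -> Prop) (HC : convex C) (P : list pt) :
  plane_drawing P (st_adj P C).
Proof.
  split.
  - intros u v w Huv Hw Hwu Hwv. exact (part1 P C HC u v w Huv Hw Hwu Hwv).
  - intros a b c d p Hab Hcd Hne H1 H2.
    assert (Hsh : a = c \/ a = d \/ b = c \/ b = d).
    { pose proof Hab as [Ha [Hb [Hab' [lam1 [w1 [Hl1 HH1]]]]]].
      pose proof Hcd as [Hc [Hd [Hcd' [lam2 [w2 [Hl2 HH2]]]]]].
      destruct (keyL C HC a b c d p lam1 w1 lam2 w2 Hl1 Hl2 Hab'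
        (proj2 (HH1 a Ha) (or_introl eq_refl)) (proj2 (HH1 b Hb) (or_intror eq_refl))
        (proj2 (HH2 c Hc) (or_introl eq_refl)) (proj2 (HH2 d Hd) (or_intror eq_refl)) H1 H2)
        as [K|[K|[K|K]]].
      - destruct (proj1 (HH1 c Hc) K) as [->| ->]; tauto.
      - destruct (proj1 (HH1 d Hd) K) as [->| ->]; tauto.
      - destruct (proj1 (HH2 a Ha) K) as [->| ->]; tauto.
      - destruct (proj1 (HH2 b Hb) K) as [->| ->]; tauto. }
    destruct Hsh as [E|[E|[E|E]]]; subst.
    + pose proof (share P C HC _ _ _ p Hab Hcd ltac:(intro; subst; apply Hne; auto) H1 H2) as Hpe.
      subst; split; auto.
    + pose proof (share P C HC _ _ _ p Hab (adj_sym _ _ _ _ Hcd) ltac:(intro; subst; apply Hne; auto) H1 (on_seg_sym _ _ _ H2)) as Hpe.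
      subst; split; auto.
    + pose proof (share P C HC _ _ _ p (adj_sym _ _ _ _ Hab) Hcd ltac:(intro; subst; apply Hne; auto) (on_seg_sym _ _ _ H1) H2) as Hpe.
      subst; split; auto.
    + pose proof (share P C HC _ _ _ p (adj_sym _ _ _ _ Hab) (adj_sym _ _ _ _ Hcd) ltac:(intro; subst; apply Hne; auto) (on_seg_sym _ _ _ H1) (on_seg_sym _ _ _ H2)) as Hpe.
      subst; split; auto.
Qed.
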